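(* Let $\bm X=X_1\times\cdots\times X_n\in\mathbb{IR}^n$ with $\operatorname{wid}(X_i)>0$ for at least one $i$. Let $Z\subseteq\mathbb{R}$ be convex with $\sum_{i=1}^n x_i\in Z$ for all $\bm x\in\bm X$, and let $\varphi:Z\to\mathbb{R}$ be convex. Define $\mathcal P=\{j:\operatorname{wid}(X_j)>0\}$, $\theta_i=\operatorname{wid}(X_i)/\sum_{j\in\mathcal P}\operatorname{wid}(X_j)$ for $i\in\mathcal P$, $\underline\sigma=\sum_{i=1}^n\underline X_i$, $\overline\sigma=\sum_{i=1}^n\overline X_i$. Then for all $\bm x\in\bm X$, $$\varphi\Big(\sum_{i=1}^n x_i\Big)\ge\sum_{i=1}^n\varphi(x_i-\underline X_i+\underline\sigma)-(n-1)\varphi(\underline\sigma)=\sum_{i\in\mathcal P}\Big(\varphi(x_i-\underline X_i+\underline\sigma)-(1-\theta_i)\varphi(\underline\sigma)\Big),$$ $$\varphi\Big(\sum_{i=1}^n x_i\Big)\ge\sum_{i=1}^n\varphi(x_i-\overline X_i+\overline\sigma)-(n-1)\varphi(\overline\sigma)=\sum_{i\in\mathcal P}\Big(\varphi(x_i-\overline X_i+\overline\sigma)-(1-\theta_i)\varphi(\overline\sigma)\Big).$$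
   Context: $\mathbb{IR}^n$ is the set of boxes $\bm X=X_1\times\cdots\times X_n$ with $X_i=[\underline X_i,\overline X_i]$ compact real intervals; $\operatorname{wid}(X_i)=\overline X_i-\underline X_i$. *)

(* Defs.v *)
From mathcomp Require Import all_boot all_order all_algebra.
From mathcomp Require Import reals.
Set Implicit Arguments. Unset Strict Implicit. Unset Printing Implicit Defensive.
Import Order.TTheory GRing.Theory Num.Theory.
Local Open Scope ring_scope.

Definition convex_subset (R : realType) (Z : R -> Prop) : Prop :=
  forall a b t : R, Z a -> Z b -> 0 <= t -> t <= 1 -> Z (t * a + (1 - t) * b).

Definition convex_on (R : realType) (Z : R -> Prop) (phi : R -> R) : Prop :=
  forall a b t : R, Z a -> Z b -> 0 <= t -> t <= 1 ->
    phi (t * a + (1 - t) * b) <= t * phi a + (1 - t) * phi b.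

Definition in_box (R : realType) (n : nat) (lo hi : 'I_n -> R) (x : 'I_n -> R) : Prop :=
  forall i, lo i <= x i <= hi i.

(* Main.v *)
Require Import Defs.
From mathcomp Require Import all_boot all_order all_algebra.
From mathcomp Require Import reals ring lra.
Import Order.TTheory GRing.Theory Num.Theory.
Local Open Scope ring_scope.

Lemma frac01 (R : realType) (a b : R) : 0 <= a -> a <= b -> 0 < b -> 0 <= a / b <= 1.
Proof.
move=> a0 ab b0; apply/andP; split; first by rewrite divr_ge0 // ltW.
by rewrite ler_pdivrMr // mul1r.
Qed.

Lemma sumC1 (R : realType) n : \sum_(i < n) (1:R) = n%:R.
Proof. by rewrite sumr_const card_ord. Qed.

Lemma key (R : realType) (n : nat) (Z : R -> Prop) (phi : R -> R)
  (hphi : convex_on Z phi) (s : R) (d : 'I_n -> R) :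
  (forall i, 0 <= d i) \/ (forall i, d i <= 0) -> Z s -> Z (s + \sum_i d i) ->
  \sum_i phi (s + d i) <= phi (s + \sum_i d i) + (n%:R - 1) * phi s.
Proof.
move=> hd Zs ZD.
set D := \sum_i d i.
have hle : forall i, 0 <= d i / D <= 1.
  move=> i; case: hd => hd.
  - have Dge : d i <= D by rewrite /D (bigD1 i) //= lerDl sumr_ge0.
    have [D0|D0] := eqVneq D 0.
      by rewrite D0 invr0 mulr0 lexx ler01.
    apply: frac01 => //; rewrite lt_def D0 /=; exact: sumr_ge0.
  - have Dge : D <= d i.
      rewrite /D (bigD1 i) //= gerDl; apply: sumr_le0 => j _; exact: hd.
    have [D0|D0] := eqVneq D 0.
      by rewrite D0 invr0 mulr0 lexx ler01.
    rewrite -mulrNN -invrN; apply: frac01; rewrite ?oppr_ge0 ?lerN2 //.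
    rewrite oppr_gt0 lt_def eq_sym D0 /= /D; apply: sumr_le0 => j _; exact: hd.
have [D0|D0] := eqVneq D 0.
  have dz : forall i, d i = 0.
    case: hd => hd i.
    - by move/eqP: D0; rewrite /D psumr_eq0 // => /allP/(_ i (mem_index_enum _)) /implyP/(_ isT)/eqP.
    - have : - D == 0 by rewrite D0 oppr0.
      rewrite /D -sumrN psumr_eq0 => [|j _]; last by rewrite oppr_ge0.
      by move=> /allP/(_ i (mem_index_enum _)) /implyP/(_ isT)/eqP/eqP; rewrite oppr_eq0 => /eqP.
  rewrite D0 addr0 (eq_bigr (fun=> phi s)) => [|i _]; last by rewrite dz addr0.
  by rewrite sumr_const card_ord -mulr_natl; lra.
apply: le_trans (_ : \sum_i (d i / D * phi (s + D) + (1 - d i / D) * phi s) <= _).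
  apply: ler_sum => i _.
  have [h0 h1] := andP (hle i).
  have -> : s + d i = d i / D * (s + D) + (1 - d i / D) * s.
    by field.
  exact: hphi.
have hs : \sum_i d i / D = 1 by rewrite -mulr_suml -/D divff.
rewrite big_split /= -mulr_suml hs mul1r.
by rewrite -mulr_suml sumrB sumC1 hs.
Qed.

Lemma eqpart (R : realType) (n : nat) (P : pred 'I_n) (f w : 'I_n -> R) (c : R) :
  (forall i, ~~ P i -> f i = c) -> \sum_(j < n | P j) w j != 0 ->
  \sum_(i < n) f i - (n%:R - 1) * c
  = \sum_(i < n | P i) (f i - (1 - w i / (\sum_(j < n | P j) w j)) * c).
Proof.
move=> hf W0.
set W := \sum_(j < n | P j) w j.
rewrite (bigID P) /= (eq_bigr (fun=> c) (fun i hi => hf i hi)) -sumC1.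
rewrite [\sum_(i < n) 1](bigID P) /= mulrDl mulrDl !mulr_suml.
rewrite sumrB.
have -> : \sum_(i < n | P i) (1 - w i / W) * c = \sum_(i < n | P i) c - c.
  rewrite -mulr_suml sumrB -mulr_suml -/W divff // mulrBl mul1r; congr (_ - _).
  by rewrite mulr_suml; apply: eq_bigr => i _; rewrite mul1r.
have -> : \sum_(i < n | P i) 1 * c = \sum_(i < n | P i) c by apply: eq_bigr => i _; rewrite mul1r.
have -> : \sum_(i < n | ~~ P i) 1 * c = \sum_(i < n | ~~ P i) c by apply: eq_bigr => i _; rewrite mul1r.
ring.
Qed.

Theorem proposition3 (R : realType) (n : nat) (lo hi : 'I_n -> R)
  (hlohi : forall i, lo i <= hi i)
  (hpos : exists i, 0 < hi i - lo i)
  (Z : R -> Prop) (hZ : convex_subset Z)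
  (hsum : forall x : 'I_n -> R, in_box lo hi x -> Z (\sum_(i < n) x i))
  (phi : R -> R) (hphi : convex_on Z phi) :
  let P := fun j : 'I_n => 0 < hi j - lo j in
  let theta := fun i : 'I_n =>
    (hi i - lo i) / (\sum_(j < n | P j) (hi j - lo j)) in
  let slo := \sum_(i < n) lo i in
  let shi := \sum_(i < n) hi i in
  forall x : 'I_n -> R, in_box lo hi x ->
    (phi (\sum_(i < n) x i) >=
       \sum_(i < n) phi (x i - lo i + slo) - (n%:R - 1) * phi slo
     /\ \sum_(i < n) phi (x i - lo i + slo) - (n%:R - 1) * phi slo
        = \sum_(i < n | P i) (phi (x i - lo i + slo) - (1 - theta i) * phi slo))
    /\
    (phi (\sum_(i < n) x i) >=
       \sum_(i < n) phi (x i - hi i + shi) - (n%:R - 1) * phi shi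
     /\ \sum_(i < n) phi (x i - hi i + shi) - (n%:R - 1) * phi shi
        = \sum_(i < n | P i) (phi (x i - hi i + shi) - (1 - theta i) * phi shi)).
Proof.
move=> P theta slo shi x hx.
have Zlo : Z slo by apply: hsum => i; rewrite lexx hlohi.
have Zhi : Z shi by apply: hsum => i; rewrite lexx hlohi.
have Zx := hsum x hx.
have W0 : \sum_(j < n | P j) (hi j - lo j) != 0.
  case: hpos => i hi0.
  rewrite (bigD1 i) //=.
  have : 0 <= \sum_(j < n | P j && (j != i)) (hi j - lo j).
    by apply: sumr_ge0 => j _; rewrite subr_ge0.
  move=> h; apply/negP => /eqP; lra.
have hxi : forall i, lo i <= x i <= hi i := hx.
split; split.
- have := @key R n Z phi hphi slo (fun i => x i - lo i).
  rewrite sumrB -/slo addrC subrK.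
  move=> /(_ _ Zlo Zx) h.
  have e : \sum_i phi (slo + (x i - lo i)) = \sum_i phi (x i - lo i + slo).
    by apply: eq_bigr => i _; rewrite addrC.
  rewrite e in h; rewrite lerBlDr; apply: h.
  by left => i; rewrite subr_ge0; case/andP: (hxi i).
- apply: eqpart => // i; rewrite /P -leNgt => h.
  have [h1 h2] := andP (hxi i).
  have -> : x i = lo i by lra.
  by rewrite subrr add0r.
- have := @key R n Z phi hphi shi (fun i => x i - hi i).
  rewrite sumrB -/shi addrC subrK.
  move=> /(_ _ Zhi Zx) h.
  have e : \sum_i phi (shi + (x i - hi i)) = \sum_i phi (x i - hi i + shi).
    by apply: eq_bigr => i _; rewrite addrC.
  rewrite e in h; rewrite lerBlDr; apply: h.
  by right => i; rewrite subr_le0; case/andP: (hxi i).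
- apply: eqpart => // i; rewrite /P -leNgt => h.
  have [h1 h2] := andP (hxi i).
  have -> : x i = hi i by lra.
  by rewrite subrr add0r.
Qed.
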